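(* Let $\theta\in(0,\pi)$ and let $z$ be a real number with $z>-\csc(\theta)$. Suppose real numbers $\lambda_1,\lambda_2,\lambda_3$ satisfy \[ \lambda_1\lambda_2\lambda_3=\csc^2(\theta)\,(\lambda_1+\lambda_2+\lambda_3+2z),\qquad \lambda_i>0\ \ (i=1,2,3),\qquad \lambda_i\lambda_j>\csc^2(\theta)\ \ (i\ne j). \] Then $g:=\sum_{i<j}\lambda_i\lambda_j+2z\sum_i\lambda_i+3z^2>0$. *)

(* Defs.v *)
From Stdlib Require Import Reals.
Open Scope R_scope.

Definition csc (t : R) : R := / sin t.

(* Main.v *)
Require Import Defs.
From Stdlib Require Import Reals.
Open Scope R_scope.
From Stdlib Require Import Lra Psatz.
Lemma aux (t x1 x2 x3 : R) : t > -1 -> 0<x1 -> 0<x2 -> 0<x3 -> x1*x2>1 -> x1*x3>1 -> x2*x3>1 ->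
 x1*x2*x3 = x1+x2+x3+2*t ->
 (x1*x2+x1*x3+x2*x3) + 2*t*(x1+x2+x3) + 3*t^2 > 0.
Proof. intros Ht H1 H2 H3 H12 H13 H23 Hp.
assert (HS : x1+x2+x3 > 3).
{ assert ((x1+x2+x3)^2 > 9) by nra. nra. }
assert (Hid : (x1*x2+x1*x3+x2*x3) + 2*t*(x1+x2+x3) + 3*t^2 =
  2*(t+1) - (x1-1)*(x2-1)*(x3-1) + 2*(t+1)*(x1+x2+x3-3) + 3*(t+1)^2) by nra.
rewrite Hid.
destruct (Rlt_or_le x1 1) as [L1|L1].
{ assert (x2>1) by nra. assert (x3>1) by nra.
  assert ((x1-1)*(x2-1)*(x3-1) <= 0).
  { assert ((x2-1)*(x3-1) > 0) by nra. nra. }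
  nra. }
destruct (Rlt_or_le x2 1) as [L2|L2].
{ assert (x3>1) by nra.
  assert ((x1-1)*(x2-1)*(x3-1) <= 0).
  { assert ((x1-1)*(x3-1) >= 0) by nra. nra. }
  nra. }
destruct (Rlt_or_le x3 1) as [L3|L3].
{ assert ((x1-1)*(x2-1)*(x3-1) <= 0).
  { assert ((x1-1)*(x2-1) >= 0) by nra. nra. }
  nra. }
rewrite <- Hid.
assert ((x1-1)*(x2-1) >= 0) by nra.
assert ((x1-1)*(x3-1) >= 0) by nra.
assert ((x2-1)*(x3-1) >= 0) by nra.
nra.
Qed.
Theorem lemma3p5 (theta z l1 l2 l3 : R) :
  0 < theta < PI ->
  z > - csc theta ->
  l1 * l2 * l3 = (csc theta) ^ 2 * (l1 + l2 + l3 + 2 * z) ->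
  0 < l1 -> 0 < l2 -> 0 < l3 ->
  l1 * l2 > (csc theta) ^ 2 ->
  l1 * l3 > (csc theta) ^ 2 ->
  l2 * l3 > (csc theta) ^ 2 ->
  (l1 * l2 + l1 * l3 + l2 * l3) + 2 * z * (l1 + l2 + l3) + 3 * z ^ 2 > 0.
Proof.
intros [Ht0 HtP] Hz Hp H1 H2 H3 H12 H13 H23.
set (c := csc theta) in *.
assert (Hc : 0 < c).
{ unfold c, csc. apply Rinv_0_lt_compat. apply sin_gt_0; lra. }
assert (A := aux (z/c) (l1/c) (l2/c) (l3/c)).
assert (E : forall a b, a/c * (b/c) = a*b / c^2) by (intros; field; lra).
assert (Hc2 : 0 < c^2) by nra.
assert (K : (l1/c*(l2/c)+l1/c*(l3/c)+l2/c*(l3/c)) + 2*(z/c)*(l1/c+l2/c+l3/c) + 3*(z/c)^2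
  = ((l1 * l2 + l1 * l3 + l2 * l3) + 2 * z * (l1 + l2 + l3) + 3 * z ^ 2) / c^2)
  by (field; lra).
rewrite K in A.
assert (G : ((l1 * l2 + l1 * l3 + l2 * l3) + 2 * z * (l1 + l2 + l3) + 3 * z ^ 2) / c^2 > 0).
{ apply A.
  - apply (Rmult_lt_reg_r c); [lra|]. unfold Rdiv. rewrite Rmult_assoc, Rinv_l; lra.
  - apply Rdiv_lt_0_compat; lra.
  - apply Rdiv_lt_0_compat; lra.
  - apply Rdiv_lt_0_compat; lra.
  - rewrite E. apply (Rmult_lt_reg_r (c^2)); [lra|]. unfold Rdiv. rewrite Rmult_assoc, Rinv_l; lra.
  - rewrite E. apply (Rmult_lt_reg_r (c^2)); [lra|]. unfold Rdiv. rewrite Rmult_assoc, Rinv_l; lra.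
  - rewrite E. apply (Rmult_lt_reg_r (c^2)); [lra|]. unfold Rdiv. rewrite Rmult_assoc, Rinv_l; lra.
  - transitivity (l1*l2*l3/c^3); [field; lra|]. rewrite Hp. field; lra. }
apply Rlt_gt. unfold Rdiv in G. 
assert (0 < / c^2) by (apply Rinv_0_lt_compat; lra).
nra.
Qed.
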